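(* Let $(V_k)_{k=1,\dots,K}$ be an $(\varepsilon,\mu)$-admissible family for some $\varepsilon>0$ and $\mu\ge1$. Let $u\in V$ with $\operatorname{dist}(u,\mathcal M)\le\varepsilon_{model}$, and let $w=P_Wu+\eta$ with $\eta\in W$, $\|\eta\|\le\varepsilon_{noise}$. Let $\mathcal S:V\to[0,\infty)$ satisfy $r\operatorname{dist}(v,\mathcal M)\le\mathcal S(v)\le R\operatorname{dist}(v,\mathcal M)$ for all $v\in V$ with $0<r\le R$, and let $u^*(w)=u^*_{k^*}(w)$ where $k^*$ is any minimizer of $k\mapsto\mathcal S(u_k^*(w))$. Then $$\|u-u^*(w)\|\le\delta_{\kappa\rho}+\varepsilon_{noise},\qquad \rho=\mu(\varepsilon+\varepsilon_{noise})+(\mu+1)\varepsilon_{model},\quad\kappa=R/r.$$ The same estimate holds with $\kappa=1$ if instead $k^*$ is any minimizer of $k\mapsto\operatorname{dist}(u_k^*(w),\mathcal M)$.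
   Context: $V$ is a real Hilbert space, $\mathcal M\subset V$ is compact, $W\subset V$ is a subspace of finite dimension $m$, $P_W$ is the orthogonal projection onto $W$ and $W^\perp$ its orthogonal complement. For a linear subspace $\bar V$ with $\bar V\cap W^\perp=\{0\}$, $\mu(\bar V,W)=\max_{v\in\bar V,\,v\ne0}\|v\|/\|P_Wv\|$ (set $\mu(\{0\},W)=1$). A family of affine spaces $V_k=\bar u_k+\bar V_k$ ($\bar u_k\in V$, $\bar V_k$ linear of dimension $\le m$, $\bar V_k\cap W^\perp=\{0\}$), $k=1,\dots,K$, is $(\varepsilon,\mu)$-admissible if there is a partition $\mathcal M=\bigcup_{k=1}^K\mathcal M_k$ with $\sup_{u\in\mathcal M_k}\operatorname{dist}(u,V_k)\le\varepsilon$ and $\mu(\bar V_k,W)\le\mu$ for all $k$. The PBDW estimators are $u_k^*(w)=\operatorname{argmin}\{\operatorname{dist}(v,V_k): v\in w+W^\perp\}$. For $\sigma\ge0$, $\mathcal M_\sigma=\{v\in V:\operatorname{dist}(v,\mathcal M)\le\sigma\}$ and $\delta_\sigma=\sup\{\|u-v\|: u,v\in\mathcal M_\sigma,\ u-v\in W^\perp\}$. *)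

(* Defs.v *)
From HB Require Import structures.
From mathcomp Require Import all_boot all_order all_algebra.
From mathcomp Require Import all_classical all_reals all_analysis.
Set Implicit Arguments. Unset Strict Implicit. Unset Printing Implicit Defensive.
Import Order.TTheory GRing.Theory Num.Theory.
Import numFieldNormedType.Exports.
Local Open Scope classical_set_scope.
Local Open Scope ring_scope.

Section Hilbert.
Variables (R : realType) (V : normedModType R).

(* Together with completeness of V
   (V : completeNormedModType R) this makes V a real Hilbert space. *)
Definition is_inner_product (ip : V -> V -> R) : Prop :=
  [/\ forall x y, ip x y = ip y x,
      forall a x y z, ip (a *: x + y) z = a * ip x z + ip y z
    & forall v, `|v| = Num.sqrt (ip v v)].

Definition span n (b : 'I_n -> V) : set V :=
  [set v | exists c : 'I_n -> R, v = \sum_(i < n) c i *: b i].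

Definition lin_indep n (b : 'I_n -> V) : Prop :=
  forall c : 'I_n -> R, \sum_(i < n) c i *: b i = 0 -> forall i, c i = 0.

Definition subspace_of_dim (A : set V) (n : nat) : Prop :=
  exists b : 'I_n -> V, lin_indep b /\ A = span b.

Definition orth (ip : V -> V -> R) (W : set V) : set V :=
  [set v | forall y, W y -> ip v y = 0].

Definition is_orth_proj (ip : V -> V -> R) (W : set V) (P : V -> V) : Prop :=
  forall v, W (P v) /\ orth ip W (v - P v).

Definition dist (v : V) (A : set V) : R := inf [set `|v - a| | a in A].

(* mu(Vbar, W) <= mu, for Vbar with Vbar \cap W^perp = {0}:
   max_{v in Vbar, v <> 0} |v| / |P_W v| <= mu *)
Definition mu_le (P : V -> V) (Vbar : set V) (mu : R) : Prop :=
  forall v, Vbar v -> v != 0 -> `|v| / `|P v| <= mu.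

Definition affine (ubar : V) (Vbar : set V) : set V := [set ubar + x | x in Vbar].

Definition fatten (M : set V) (sigma : R) : set V := [set v | dist v M <= sigma].

Definition delta (ip : V -> V -> R) (W M : set V) (sigma : R) : R :=
  sup [set d : R | exists x y : V,
        [/\ fatten M sigma x, fatten M sigma y, orth ip W (x - y) & d = `|x - y|]].

Definition admissible (ip : V -> V -> R) (W : set V) (m : nat) (P : V -> V)
  (M : set V) (K : nat) (ubar : 'I_K -> V) (Vbar : 'I_K -> set V)
  (eps mu : R) : Prop :=
  (forall k, exists2 n, (n <= m)%N & subspace_of_dim (Vbar k) n) /\
  (forall k, Vbar k `&` orth ip W = [set 0]) /\
  (exists Mk : 'I_K -> set V,
     [/\ M = \bigcup_(k in [set: 'I_K]) Mk k,
         (forall k l, k != l -> Mk k `&` Mk l = set0),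
         (forall k u, Mk k u -> dist u (affine (ubar k) (Vbar k)) <= eps)
       & (forall k, mu_le P (Vbar k) mu)]).

Definition is_pbdw (ip : V -> V -> R) (W : set V) (A : set V) (w v : V) : Prop :=
  orth ip W (v - w) /\
  forall v', orth ip W (v' - w) -> dist v A <= dist v' A.

End Hilbert.

(* Main.v *)
Require Import Defs.
From HB Require Import structures.
From mathcomp Require Import all_boot all_order all_algebra.
From mathcomp Require Import all_classical all_reals all_analysis.
From mathcomp Require Import ring lra.
Set Implicit Arguments. Unset Strict Implicit. Unset Printing Implicit Defensive.
Import Order.TTheory GRing.Theory Num.Theory.
Import numFieldNormedType.Exports.
Local Open Scope classical_set_scope.
Local Open Scope ring_scope.
Section IP.
Variables (R : realType) (V : normedModType R) (ip : V -> V -> R).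
Hypothesis Hip : is_inner_product ip.

Lemma ipC x y : ip x y = ip y x.
Proof. by case: Hip. Qed.

Lemma ipDZl a x y z : ip (a *: x + y) z = a * ip x z + ip y z.
Proof. by case: Hip. Qed.

Lemma ipDl x y z : ip (x + y) z = ip x z + ip y z.
Proof. by rewrite -[x]scale1r ipDZl mul1r scale1r. Qed.

Lemma ip0l z : ip 0 z = 0.
Proof.
have := ipDl 0 0 z; rewrite addr0 => h.
have : ip 0 z + ip 0 z - ip 0 z = ip 0 z - ip 0 z by rewrite -h.
by rewrite addrK subrr.
Qed.

Lemma ipZl a x z : ip (a *: x) z = a * ip x z.
Proof. by rewrite -[a *: x]addr0 ipDZl ip0l addr0. Qed.

Lemma ipNl x z : ip (- x) z = - ip x z.
Proof. by rewrite -scaleN1r ipZl mulN1r. Qed.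

Lemma ipBl x y z : ip (x - y) z = ip x z - ip y z.
Proof. by rewrite ipDl ipNl. Qed.

Lemma ipDr x y z : ip z (x + y) = ip z x + ip z y.
Proof. by rewrite ipC ipDl !(ipC _ z). Qed.
Lemma ipZr a x z : ip z (a *: x) = a * ip z x.
Proof. by rewrite ipC ipZl ipC. Qed.
Lemma ipBr x y z : ip z (x - y) = ip z x - ip z y.
Proof. by rewrite ipC ipBl !(ipC _ z). Qed.
Lemma ip0r z : ip z 0 = 0.
Proof. by rewrite ipC ip0l. Qed.

Lemma ipvv v : ip v v = `|v| ^+ 2.
Proof.
case: Hip => _ _ hn.
have [h|h] := leP 0 (ip v v).
  by rewrite hn sqr_sqrtr.
have : `|v| = 0 by rewrite hn; apply/eqP; rewrite sqrtr_eq0 ltW.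
move/normr0_eq0 => v0. by move: h; rewrite v0 ip0l ltxx.
Qed.

Lemma ip_self0 v : ip v v = 0 -> v = 0.
Proof.
rewrite ipvv => /eqP; rewrite sqrf_eq0 => /eqP; exact: normr0_eq0.
Qed.

Lemma pyth x y : ip x y = 0 -> `|x + y| ^+ 2 = `|x| ^+ 2 + `|y| ^+ 2.
Proof.
move=> h; rewrite -!ipvv ipDl !ipDr h (ipC y x) h; ring.
Qed.

Lemma ipsum_l n (c : 'I_n -> R) (f : 'I_n -> V) z :
  ip (\sum_(i < n) c i *: f i) z = \sum_(i < n) c i * ip (f i) z.
Proof.
rewrite (big_morph (fun x => ip x z) (id1 := 0) (op1 := +%R)).
- by apply: eq_bigr => i _; rewrite ipZl.
- by move=> x y; rewrite ipDl.
- by rewrite ip0l.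
Qed.

Lemma ipsum_r n (c : 'I_n -> R) (f : 'I_n -> V) z :
  ip z (\sum_(i < n) c i *: f i) = \sum_(i < n) c i * ip z (f i).
Proof.
rewrite ipC ipsum_l; apply: eq_bigr => i _; by rewrite ipC.
Qed.

Lemma proj_exists n (f : 'I_n -> V) x :
  exists c : 'I_n -> R, forall j, ip (x - \sum_(i < n) c i *: f i) (f j) = 0.
Proof.
elim: n f x => [|n IH] f x.
  by exists (fun _ => 0) => -[].
pose f' := fun i : 'I_n => f (lift ord0 i).
have [c1 Hc1] := IH f' x.
have [d Hd] := IH f' (f ord0).
pose r := x - \sum_(i < n) c1 i *: f' i.
pose g := f ord0 - \sum_(i < n) d i *: f' i.
have [g0|gn0] := eqVneq (ip g g) 0.
  have g00 := @ip_self0 g g0.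
  have f0E : f ord0 = \sum_(i < n) d i *: f' i by apply/eqP; rewrite -subr_eq0 -/g g00.
  exists (fun i => if unlift ord0 i is Some j then c1 j else 0) => j.
  rewrite big_ord_recl unlift_none scale0r add0r.
  under eq_bigr => i _ do rewrite liftK.
  case: (unliftP ord0 j) => [j'|] ->.
    exact: Hc1.
  rewrite f0E ipsum_r big1 // => i _; by rewrite Hc1 mulr0.
pose lam := ip r g / ip g g.
exists (fun i => if unlift ord0 i is Some j then c1 j - lam * d j else lam) => j.
rewrite big_ord_recl unlift_none.
under eq_bigr => i _ do rewrite liftK scalerBl -scalerA.
rewrite sumrB -scaler_sumr.
have -> : x - (lam *: f ord0 + (\sum_(i < n) c1 i *: f' i - lam *: \sum_(i < n) d i *: f' i))
   = r - lam *: g.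
  rewrite /r /g scalerBr; set A := \sum_(i < n) _ ; set B := \sum_(i < n) _. 
  move: (lam *: f ord0) (lam *: B) => a b.
  rewrite opprD opprB !addrA -!addrA; congr (x + _).
  by rewrite opprB addrCA [RHS]addrCA [- a + _]addrC.
have hgf : forall j, ip g (f' j) = 0 by move=> j'; exact: Hd.
case: (unliftP ord0 j) => [j'|] ->.
  by rewrite ipBl ipZl hgf mulr0 subr0 Hc1.
have -> : f ord0 = g + \sum_(i < n) d i *: f' i by rewrite /g subrK.
rewrite ipDr ipsum_r big1; last first.
  by move=> i _; rewrite ipBl ipZl hgf mulr0 subr0 Hc1 mulr0.
rewrite addr0 ipBl ipZl /lam divfK //; by rewrite subrr.
Qed.

End IP.
Section Dist.
Variables (R : realType) (V : normedModType R).

Lemma le_sqr (x y : R) : 0 <= y -> x ^+ 2 <= y ^+ 2 -> x <= y.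
Proof. move=> y0 h; rewrite leNgt; apply/negP => H; nra. Qed.

Lemma dist_hasinf (v : V) {A : set V} : A !=set0 -> has_inf [set `|v - a| | a in A].
Proof.
case=> a Aa; split; first by exists `|v - a|, a.
by exists 0 => _ [b _ <-].
Qed.

Lemma dist_le (v a : V) (A : set V) : A a -> dist v A <= `|v - a|.
Proof.
move=> Aa; rewrite /dist.
have [_ hl] := dist_hasinf v (A:=A) (ex_intro _ a Aa).
by apply: ge_inf => //; exists a.
Qed.

Lemma dist_ge0 (v : V) (A : set V) : A !=set0 -> 0 <= dist v A.
Proof.
case=> a Aa; apply: lb_le_inf; first by exists `|v - a|, a.
by move=> _ [b _ <-].
Qed.

Lemma dist_approx (v : V) (A : set V) t : A !=set0 -> 0 < t ->
  exists2 a, A a & `|v - a| < dist v A + t.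
Proof.
move=> An0 t0; have [_ [b Ab <-] h] := inf_adherent t0 (@dist_hasinf v A An0).
by exists b.
Qed.

Lemma dist_lip (x y : V) (A : set V) : A !=set0 -> dist x A <= dist y A + `|x - y|.
Proof.
move=> An0; rewrite -lerBlDr; apply: lb_le_inf.
  by case: An0 => a Aa; exists `|y - a|, a.
move=> _ [a Aa <-]; rewrite lerBlDr.
apply: le_trans (dist_le x Aa) _.
have -> : x - a = (x - y) + (y - a) by rewrite addrA subrK.
by rewrite addrC ler_normD.
Qed.

Lemma le0_eps (x C : R) : 0 <= C ->
  (forall t, 0 < t -> t <= 1 -> x <= C * t) -> x <= 0.
Proof.
move=> C0 h; rewrite leNgt; apply/negP => x0.
pose t := Num.min 1 (x / (2 * (C + 1))).
have t0 : 0 < t by rewrite lt_min ltr01 divr_gt0 //; lra.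
have t1 : t <= 1 by rewrite ge_min lexx.
have t2 : t <= x / (2 * (C + 1)) by rewrite ge_min lexx orbT.
have := h t t0 t1.
have : C * t <= C * (x / (2 * (C + 1))) by apply: ler_wpM2l.
have : C * (x / (2 * (C + 1))) < x.
  rewrite mulrA ltr_pdivrMr; last lra. nra.
lra.
Qed.

End Dist.

Section Lin.
Variables (R : realType) (V : normedModType R) (ip : V -> V -> R).
Hypothesis Hip : is_inner_product ip.

Lemma span0 n (b : 'I_n -> V) : Defs.span b 0.
Proof. by exists (fun _ => 0); rewrite big1 // => i _; rewrite scale0r. Qed.

Lemma spanD n (b : 'I_n -> V) x y : Defs.span b x -> Defs.span b y -> Defs.span b (x + y).
Proof.
move=> [c ->] [d ->]; exists (fun i => c i + d i).
by rewrite -big_split; apply: eq_bigr => i _; rewrite scalerDl.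
Qed.

Lemma spanZ n (b : 'I_n -> V) a x : Defs.span b x -> Defs.span b (a *: x).
Proof.
move=> [c ->]; exists (fun i => a * c i).
by rewrite scaler_sumr; apply: eq_bigr => i _; rewrite scalerA.
Qed.

Lemma spanB n (b : 'I_n -> V) x y : Defs.span b x -> Defs.span b y -> Defs.span b (x - y).
Proof. by move=> hx hy; apply: spanD => //; rewrite -scaleN1r; apply: spanZ. Qed.

Lemma orthD (W : set V) x y : orth ip W x -> orth ip W y -> orth ip W (x + y).
Proof. by move=> hx hy z Wz; rewrite (ipDl Hip) hx ?hy ?addr0. Qed.
Lemma orthZ (W : set V) a x : orth ip W x -> orth ip W (a *: x).
Proof. by move=> hx z Wz; rewrite (ipZl Hip) hx ?mulr0. Qed.
Lemma orthB (W : set V) x y : orth ip W x -> orth ip W y -> orth ip W (x - y).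
Proof. by move=> hx hy; apply: orthD => //; rewrite -scaleN1r; apply: orthZ. Qed.
Lemma orth0 (W : set V) : orth ip W 0.
Proof. by move=> z _; rewrite (ip0l Hip). Qed.

Variables (W : set V) (P : V -> V).
Hypothesis HP : is_orth_proj ip W P.
Hypothesis WD : forall x y, W x -> W y -> W (x + y).
Hypothesis WZ : forall a x, W x -> W (a *: x).

Lemma WB x y : W x -> W y -> W (x - y).
Proof. by move=> hx hy; apply: WD => //; rewrite -scaleN1r; apply: WZ. Qed.

Lemma PinW v : W (P v). Proof. by case: (HP v). Qed.
Lemma PQ v : orth ip W (v - P v). Proof. by case: (HP v). Qed.

Lemma orthW0 v : W v -> orth ip W v -> v = 0.
Proof. by move=> Wv ov; apply: (ip_self0 Hip); apply: ov. Qed.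

Lemma Puniq v y : W y -> orth ip W (v - y) -> P v = y.
Proof.
move=> Wy oy; apply/eqP; rewrite -subr_eq0; apply/eqP; apply: orthW0.
  by apply: WB => //; apply: PinW.
have -> : P v - y = (v - y) - (v - P v).
  by rewrite opprB [RHS]addrC [RHS]addrA subrK.
by apply: orthB => //; apply: PQ.
Qed.

Lemma PD x y : P (x + y) = P x + P y.
Proof.
apply: Puniq; first by apply: WD; apply: PinW.
have -> : x + y - (P x + P y) = (x - P x) + (y - P y).
  by rewrite opprD addrACA.
by apply: orthD; apply: PQ.
Qed.

Lemma PZ a x : P (a *: x) = a *: P x.
Proof.
apply: Puniq; first by apply: WZ; apply: PinW.
by rewrite -scalerBr; apply: orthZ; apply: PQ.
Qed.

Lemma PN x : P (- x) = - P x.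
Proof. by rewrite -scaleN1r PZ scaleN1r. Qed.
Lemma PB x y : P (x - y) = P x - P y.
Proof. by rewrite PD PN. Qed.
Lemma PW y : W y -> P y = y.
Proof. by move=> Wy; apply: Puniq => //; rewrite subrr; apply: orth0. Qed.
Lemma P0 : P 0 = 0.
Proof. by apply: PW; rewrite -(scale0r (P 0)); apply: WZ; apply: PinW. Qed.

Lemma Psum n (c : 'I_n -> R) (f : 'I_n -> V) :
  P (\sum_(i < n) c i *: f i) = \sum_(i < n) c i *: P (f i).
Proof.
rewrite (big_morph P (id1 := 0) (op1 := +%R) PD P0).
by apply: eq_bigr => i _; rewrite PZ.
Qed.

Lemma orth_ip v y : orth ip W v -> W y -> ip y v = 0.
Proof. by move=> ov Wy; rewrite (ipC Hip); apply: ov. Qed.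

Lemma pythP v : `|v| ^+ 2 = `|P v| ^+ 2 + `|v - P v| ^+ 2.
Proof.
rewrite -(pyth Hip); first by rewrite addrC subrK.
by apply: orth_ip; [apply: PQ | apply: PinW].
Qed.

Lemma normP v : `|P v| <= `|v|.
Proof.
apply: le_sqr => //; rewrite (pythP v); have := sqr_ge0 `|v - P v|; lra.
Qed.

End Lin.
Lemma scal (R : realType) (s B p q n r : R) :
  0 <= s -> 0 <= B -> 0 <= p -> 0 <= q -> 0 <= n -> 0 <= r ->
  r ^+ 2 = p ^+ 2 + q ^+ 2 -> B <= s * (p + n) ->
  n ^+ 2 + (B + q) ^+ 2 <= (1 + s ^+ 2) * (r + n) ^+ 2.
Proof.
move=> s0 B0 p0 q0 n0 r0 hr hB.
have rp : p <= r.
  rewrite leNgt; apply/negP => H; nra.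
have rq : q <= r.
  rewrite leNgt; apply/negP => H; nra.
have h1 : q ^+ 2 <= 2 * r * (r - p).
  have : q^+2 = (r - p) * (r + p) by rewrite -[X in X = _](addKr (p^+2)) addrC -hr; ring.
  move=> ->. have : r + p <= 2 * r by lra. have : 0 <= r - p by lra. nra.
have h2 : 0 <= r * (s ^+ 2 * (r - p) + r - s * q).
  have : 0 <= s^+2 * q^+2 + 2 * r^+2 - 2 * s * q * r.
    have : 0 <= (s * q - r)^+2 + r^+2 by nra. 
    have -> : (s * q - r)^+2 + r^+2 = s^+2 * q^+2 + 2 * r^+2 - 2 * s * q * r by ring.
    done.
  have : 0 <= s^+2 by nra.
  nra.
have h3 : 0 <= s ^+ 2 * (r - p) + r - s * q.
  have [r00|rpos] := eqVneq r 0.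
    have q00 : q = 0 by lra.
    have : p = 0 by lra.
    move=> ->; rewrite q00 r00; lra.
  have : 0 < r by rewrite lt_def rpos r0.
  nra.
have hB2 : (B + q)^+2 <= (s * (p + n) + q) ^+ 2.
  have : B + q <= s * (p + n) + q by lra.
  have : 0 <= B + q by lra. nra.
have E : (1 + s ^+ 2) * (r + n) ^+ 2 - n^+2 - (s * (p + n) + q) ^+ 2 =
   (s * q - p)^+2 + 2 * n * (s ^+ 2 * (r - p) + r - s * q) + (1 + s^+2) * (r^+2 - p^+2 - q^+2).
  ring.
rewrite hr in E.
have : 0 <= (1 + s ^+ 2) * (r + n) ^+ 2 - n^+2 - (s * (p + n) + q) ^+ 2.
  rewrite E. have -> : p ^+ 2 + q ^+ 2 - p ^+ 2 - q ^+ 2 = 0 by ring.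
  rewrite mulr0 addr0. have := sqr_ge0 (s * q - p). have := mulr_ge0 n0 h3. nra.
lra.
Qed.
Section Grp.
Variable (G : zmodType).
Lemma G1 (x y z : G) : (x - y) - (z - y) = x - z.
Proof. by rewrite opprB addrA subrK. Qed.
Lemma G2 (x y u v : G) : (x - y) - (u - v) = (x - u) - (y - v).
Proof. by rewrite !opprB addrACA [RHS]addrACA [- u + _]addrC. Qed.
End Grp.

Section Key.
Variables (R : realType) (V : normedModType R) (ip : V -> V -> R).
Hypothesis Hip : is_inner_product ip.
Variables (W : set V) (P : V -> V).
Hypothesis HP : is_orth_proj ip W P.
Hypothesis WD : forall x y, W x -> W y -> W (x + y).
Hypothesis WZ : forall a x, W x -> W (a *: x).
Variables (n : nat) (bV : 'I_n -> V) (ubar : V) (mu : R).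
Hypothesis mu1 : 1 <= mu.
Hypothesis Hmu : mu_le P (Defs.span bV) mu.
Hypothesis Hint : Defs.span bV `&` orth ip W = [set 0].

Let PD' := PD Hip HP WD WZ.
Let PB' := PB Hip HP WD WZ.
Let PW' := PW Hip HP WD WZ.
Let Puniq' := Puniq Hip HP WD WZ.
Let Psum' := Psum Hip HP WD WZ.
Let WB' := WB WD WZ.
Let pythP' := pythP Hip HP.
Let PinW' := PinW HP.
Let PQ' := PQ HP.

Lemma QB x y : (x - y) - P (x - y) = (x - P x) - (y - P y).
Proof. by rewrite PB' G2. Qed.

Lemma muP y : Defs.span bV y -> `|y| <= mu * `|P y|.
Proof.
move=> Hy; have [->|yn0] := eqVneq y 0.
  by rewrite normr0; apply: mulr_ge0; [apply: le_trans ler01 mu1 | apply: normr_ge0].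
have Pyn0 : P y != 0.
  apply/eqP => Py0; move/eqP: yn0; apply.
  have : (Defs.span bV `&` orth ip W) y.
    by split => //; have := PQ' y; rewrite Py0 subr0.
  by rewrite Hint.
have := Hmu Hy yn0; rewrite ler_pdivrMr ?normr_gt0 //.
Qed.

Lemma Qbnd y : Defs.span bV y -> `|y - P y| ^+ 2 <= (mu ^+ 2 - 1) * `|P y| ^+ 2.
Proof.
move=> Hy; have h := muP Hy; have := pythP' y.
have h0 := normr_ge0 y; have h1 := normr_ge0 (P y).
have : `|y| ^+ 2 <= (mu * `|P y|) ^+ 2 by rewrite ler_sqr // nnegrE; nra.
nra.
Qed.

Lemma key (w x eta vs a' : V) : W eta -> w = P x + eta ->
  is_pbdw ip W (affine ubar (Defs.span bV)) w vs ->
  affine ubar (Defs.span bV) a' ->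
  `|vs - x| <= mu * (`|x - a'| + `|eta|).
Proof.
set A := affine ubar (Defs.span bV).
move=> Weta hw [hvs hopt] Aa'.
have m1 : 1 <= mu := mu1.
have Ww : W w by rewrite hw; apply: WD => //; apply: PinW'.
have Pvs : P vs = w := Puniq' Ww hvs.
have [c Hc] := proj_exists Hip (fun i => P (bV i)) (w - P ubar).
set vb := \sum_(i < n) c i *: bV i.
have Hvb : Defs.span bV vb by exists c.
set a := ubar + vb.
have Aa : A a by exists vb.
have PaE : P a = P ubar + \sum_(i < n) c i *: P (bV i) by rewrite PD' Psum'.
set g := w - P a.
have Wg : W g by apply: WB' => //; apply: PinW'.
have hg : forall y, Defs.span bV y -> ip g (P y) = 0.
  move=> y [e ->]; rewrite Psum' (ipsum_r Hip) big1 // => i _.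
  have -> : g = w - P ubar - \sum_(i < n) c i *: P (bV i) by rewrite /g PaE opprD addrA.
  by have := Hc i => /= ->; rewrite mulr0.
have hgV : forall a'', A a'' -> Defs.span bV (a - a'').
  move=> _ [z Hz <-]; have -> : a - (ubar + z) = vb - z.
    by rewrite /a opprD addrACA subrr add0r.
  exact: spanB.
have decomp : forall v a'', orth ip W (v - w) -> A a'' ->
   `|v - a''| ^+ 2 = `|g| ^+ 2 + `|P (a - a'')| ^+ 2 + `|(v - a'') - P (v - a'')| ^+ 2.
  move=> v a'' hv Aa''.
  have Pv : P v = w := Puniq' Ww hv.
  rewrite (pythP' (v - a'')) {1}PB' Pv.
  have -> : w - P a'' = g + P (a - a'') by rewrite /g PB' addrA subrK.
  by rewrite (pyth Hip) //; apply: hg; apply: hgV.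
set vt := a + g.
have hvt : orth ip W (vt - w).
  have -> : vt - w = a - P a by rewrite /vt /g addrA addrAC addrK.
  exact: PQ'.
have Avt : dist vt A <= `|g|.
  by have := dist_le vt Aa; rewrite /vt addrC addrK.
have dvs : dist vs A <= `|g| := le_trans (hopt vt hvt) Avt.
have An0 : A !=set0 by exists a.
have Pvt : P vt = w by rewrite /vt PD' (PW' Wg) /g addrC subrK.
have vs_vt : vs = vt.
  apply/eqP; rewrite -subr_eq0; apply/eqP; apply: normr0_eq0.
  set D := `|vs - vt|.
  have D2 : D ^+ 2 <= 0.
    apply: (@le0_eps _ _ (2 * mu ^+ 2 * (2 * `|g| + 1))).
      by apply: mulr_ge0; [nra | have := normr_ge0 g; lra].
    move=> t t0 t1.
    have [at_ Aat hat] := dist_approx vs An0 t0.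
    have hd := decomp vs at_ hvs Aat.
    set X := `|vs - at_ - P (vs - at_)| in hd.
    set Y := `|P (a - at_)| in hd.
    set Z := `|a - at_ - P (a - at_)|.
    have hZ : Z ^+ 2 <= (mu ^+ 2 - 1) * Y ^+ 2 by apply: Qbnd; apply: hgV.
    have hD : D <= X + Z.
      rewrite /D /X /Z.
      have -> : vs - vt = (vs - at_ - P (vs - at_)) - (a - at_ - P (a - at_)).
        by rewrite [in RHS]QB [in RHS]QB G1 Pvs -G2 /vt opprD addrA.
      exact: ler_normB.
    have hv0 := normr_ge0 (vs - at_).
    have hg0 := normr_ge0 g.
    have hX0 : 0 <= X by apply: normr_ge0.
    have hY0 : 0 <= Y by apply: normr_ge0.
    have hZ0 : 0 <= Z by apply: normr_ge0.
    have hD0 : 0 <= D by apply: normr_ge0.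
    have hlt : `|vs - at_| < `|g| + t by lra.
    have hsq : `|vs - at_| ^+ 2 <= (`|g| + t) ^+ 2.
      by rewrite ler_sqr ?nnegrE; lra.
    have hXY : X ^+ 2 + Y ^+ 2 <= (2 * `|g| + 1) * t by nra.
    have hD2 : D ^+ 2 <= (X + Z) ^+ 2 by rewrite ler_sqr ?nnegrE; lra.
    have : (X + Z) ^+ 2 <= 2 * X ^+ 2 + 2 * Z ^+ 2 by have := sqr_ge0 (X - Z); nra.
    have : 2 * X ^+ 2 + 2 * Z ^+ 2 <= 2 * mu ^+ 2 * (X ^+ 2 + Y ^+ 2).
      have : 1 <= mu ^+ 2 by nra.
      have := sqr_ge0 X; have := sqr_ge0 Y. nra.
    nra.
  have : D ^+ 2 = 0 by apply/le_anti; rewrite D2 sqr_ge0.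
  by move/eqP; rewrite sqrf_eq0 => /eqP.
rewrite vs_vt.
case: Aa' => z' Hz' ha'.
set b := a - a'.
have Hb : Defs.span bV b by apply: hgV; exists z'.
set e := x - a'.
have hPvt : P (vt - x) = eta by rewrite PB' Pvt hw addrAC subrr add0r.
have hQvt : (vt - x) - P (vt - x) = (b - P b) - (e - P e).
  have Qvt : vt - P vt = a - P a by rewrite Pvt /vt /g addrA addrAC addrK.
  by rewrite QB Qvt -[in LHS]QB -[in RHS]QB /b /e G1.
have hnorm : `|vt - x| ^+ 2 = `|eta| ^+ 2 + `|(b - P b) - (e - P e)| ^+ 2.
  by rewrite (pythP' (vt - x)) hQvt hPvt.
have hPb : `|P b| <= `|P e| + `|eta|.
  have hwa : w - P a' = g + P b by rewrite /g /b PB' addrA subrK.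
  have hwa2 : w - P a' = P e + eta by rewrite hw /e PB' addrAC.
  have : `|P b| ^+ 2 <= `|P e + eta| ^+ 2.
    rewrite -hwa2 hwa (pyth Hip); last by apply: hg.
    have := sqr_ge0 `|g|; lra.
  move=> h; apply: le_trans (ler_normD _ _).
  by apply: le_sqr => //.
pose s := Num.sqrt (mu ^+ 2 - 1).
have s0 : 0 <= s by apply: sqrtr_ge0.
have s2 : s ^+ 2 = mu ^+ 2 - 1 by rewrite sqr_sqrtr //; nra.
have hB : `|b - P b| <= s * (`|P e| + `|eta|).
  apply: le_sqr; first by apply: mulr_ge0 => //; apply: addr_ge0; apply: normr_ge0.
  apply: (le_trans (Qbnd Hb)); rewrite exprMn s2.
  apply: ler_wpM2l; first nra.
  by rewrite ler_sqr ?nnegrE ?normr_ge0 //; apply: addr_ge0; apply: normr_ge0.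
have hr := pythP' e.
have hsc := scal s0 (normr_ge0 (b - P b)) (normr_ge0 (P e)) (normr_ge0 (e - P e))
   (normr_ge0 eta) (normr_ge0 e) hr hB.
apply: le_sqr; first by apply: mulr_ge0; [lra | apply: addr_ge0; apply: normr_ge0].
rewrite hnorm exprMn.
apply: le_trans (_ : `|eta| ^+ 2 + (`|b - P b| + `|e - P e|) ^+ 2 <= _).
  rewrite lerD2l ler_sqr ?nnegrE; first exact: ler_normB.
    exact: normr_ge0.
  by apply: addr_ge0; apply: normr_ge0.
by move: hsc; rewrite s2 (addrC 1) subrK.
Qed.

End Key.
Lemma bnd_M (R : realType) (V : normedModType R) (M : set V) :
  compact M -> exists B0, forall x, M x -> `|x| <= B0.
Proof.
move=> cM; case: (compact_bounded cM) => B0 [_ hB].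
exists (B0 + 1) => x Mx; apply: (hB (B0 + 1)) => //; by rewrite ltrDl ltr01.
Qed.

Theorem theorem3p4 (R : realType) (V : completeNormedModType R)
  (ip : V -> V -> R) (W : set V) (m : nat) (P : V -> V) (M : set V)
  (K : nat) (ubar : 'I_K -> V) (Vbar : 'I_K -> set V)
  (eps mu eps_model eps_noise : R) (u eta : V) (ustar : 'I_K -> V) :
  is_inner_product ip ->
  subspace_of_dim W m ->
  is_orth_proj ip W P ->
  compact M -> M !=set0 ->
  0 < eps -> 1 <= mu ->
  admissible ip W m P M ubar Vbar eps mu ->
  dist u M <= eps_model ->
  W eta -> `|eta| <= eps_noise ->
  (forall k, is_pbdw ip W (affine (ubar k) (Vbar k)) (P u + eta) (ustar k)) ->
  let rho := mu * (eps + eps_noise) + (mu + 1) * eps_model in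
  (forall (S : V -> R) (r Rr : R),
     (forall v, 0 <= S v) -> 0 < r -> r <= Rr ->
     (forall v, r * dist v M <= S v /\ S v <= Rr * dist v M) ->
     forall kstar : 'I_K, (forall k, S (ustar kstar) <= S (ustar k)) ->
     `|u - ustar kstar| <= delta ip W M (Rr / r * rho) + eps_noise) /\
  (forall kstar : 'I_K, (forall k, dist (ustar kstar) M <= dist (ustar k) M) ->
     `|u - ustar kstar| <= delta ip W M (1 * rho) + eps_noise).
Proof.
move=> Hip [bW [_ EW]] HP cM Mn0 eps0 mu1 [Hdim [Hint [Mk [HM _ Hdist Hmu]]]]
  du Weta neta Hpb rho.
have WD : forall x y, W x -> W y -> W (x + y) by rewrite EW; exact: spanD.
have WZ : forall a x, W x -> W (a *: x) by rewrite EW; exact: spanZ.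
have du0 : 0 <= dist u M by apply: dist_ge0.
have eta0 := normr_ge0 eta.
have rho0 : eps_model + eps_noise <= rho by rewrite /rho; nra.
have est : forall t, 0 < t -> exists k,
    dist (ustar k) M <= rho + (2 * mu + 1) * t.
  move=> t t0.
  have [u' Mu' hu'] := dist_approx u Mn0 t0.
  have : (\bigcup_(k in [set: 'I_K]) Mk k) u' by rewrite -HM.
  move=> -[k _ hk].
  exists k.
  have [nk _ [bk [_ EV]]] := Hdim k.
  have Hpbk := Hpb k; rewrite EV in Hpbk.
  have Hmuk := Hmu k; rewrite EV in Hmuk.
  have Hintk := Hint k; rewrite EV in Hintk.
  have hd := Hdist k u' hk; rewrite EV in hd.
  have An0 : affine (ubar k) (Defs.span bk) !=set0.
    by exists (ubar k + 0), 0 => //; apply: span0.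
  have [a' Aa' ha'] := dist_approx u' An0 t0.
  have hkey := key Hip HP WD WZ mu1 Hmuk Hintk Weta (erefl _) Hpbk Aa'.
  have hua : `|u - a'| <= `|u - u'| + `|u' - a'|.
    have -> : u - a' = (u - u') + (u' - a') by rewrite addrA subrK.
    exact: ler_normD.
  have hdk : dist (ustar k) M <= `|ustar k - u'| := dist_le _ Mu'.
  have hsu : `|ustar k - u'| <= `|ustar k - u| + `|u - u'|.
    have -> : ustar k - u' = (ustar k - u) + (u - u') by rewrite addrA subrK.
    exact: ler_normD.
  have n1 := normr_ge0 (u - u'); have n2 := normr_ge0 (u' - a').
  have T1 : `|u - u'| <= eps_model + t by lra.
  have T2 : `|u' - a'| <= eps + t by lra.
  have T3 : `|u - a'| <= eps_model + t + (eps + t) by apply: le_trans hua _; apply: lerD.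
  have T4 : mu * (`|u - a'| + `|eta|) <= mu * (eps_model + t + (eps + t) + eps_noise).
    apply: ler_wpM2l; first lra.
    by apply: lerD.
  apply: le_trans hdk _; apply: le_trans hsu _.
  apply: le_trans (lerD (le_trans hkey T4) T1) _.
  rewrite /rho le_eqVlt; apply/orP; left; apply/eqP; ring.
have final : forall sigma kstar, eps_model + eps_noise <= sigma ->
    dist (ustar kstar) M <= sigma ->
    `|u - ustar kstar| <= delta ip W M sigma + eps_noise.
  move=> sigma ks hs hks.
  have [hvs _] := Hpb ks.
  set vs := ustar ks in hvs hks *.
  have fx : fatten M sigma (u + eta).
    rewrite /fatten /=; apply: le_trans (dist_lip _ u Mn0) _.
    by rewrite addrAC subrr add0r; lra.
  have ox : orth ip W (u + eta - vs).
    have -> : u + eta - vs = (u - P u) - (vs - (P u + eta)) by rewrite opprB !addrA subrK.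
    by apply: (orthB Hip) => //; apply: (PQ HP).
  have hsup : `|u + eta - vs| <= delta ip W M sigma.
    apply: sup_upper_bound; last by exists (u + eta), vs.
    split; first by exists `|u + eta - vs|, (u + eta), vs.
    have [B0 hB0] := bnd_M cM.
    have hf : forall x, fatten M sigma x -> `|x| <= sigma + 1 + B0.
      move=> x hx; have [a Ma ha] := dist_approx x Mn0 ltr01.
      have := hB0 a Ma; have : `|x| <= `|x - a| + `|a|.
        by rewrite -{1}(subrK a x) ler_normD.
        
      rewrite /fatten /= in hx; lra.
    exists (2 * (sigma + 1 + B0)) => _ [x [y [hx hy _ ->]]].
    apply: le_trans (ler_normB _ _) _.
    have := hf x hx; have := hf y hy; lra.
  have -> : u - vs = (u + eta - vs) - eta by rewrite addrAC addrK.
  apply: le_trans (ler_normB _ _) _; lra.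
split.
- move=> S r Rr S0 r0 rR hS ks hks.
  apply: final.
    have : rho <= Rr / r * rho.
      rewrite -subr_ge0 -{2}(mul1r rho) -mulrBl; apply: mulr_ge0; last by nra.
      by rewrite subr_ge0 ler_pdivlMr // mul1r.
    lra.
  rewrite -subr_le0; apply: (@le0_eps _ _ (Rr / r * (2 * mu + 1))).
    by apply: mulr_ge0; [apply: divr_ge0; lra | lra].
  move=> t t0 _; have [k hk] := est t t0.
  have [h1 _] := hS (ustar ks); have [_ h2] := hS (ustar k).
  have h3 := hks k.
  have : r * dist (ustar ks) M <= Rr * (rho + (2 * mu + 1) * t).
    apply: le_trans h1 _; apply: le_trans h3 _; apply: le_trans h2 _.
    by apply: ler_wpM2l => //; lra.
  rewrite -ler_pdivlMl // => h.
  rewrite lerBlDl; apply: le_trans h _.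
  by rewrite le_eqVlt; apply/orP; left; apply/eqP; ring.
- move=> ks hks; apply: final; first by rewrite mul1r.
  rewrite mul1r -subr_le0; apply: (@le0_eps _ _ (2 * mu + 1)); first lra.
  move=> t t0 _; have [k hk] := est t t0.
  have := hks k; lra.
Qed.
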